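(* For $k=1,\dots,K$, let $\mathcal{P}^k$ be a family of probability densities on $\mathbb{R}^n$, and let $X^k_1,X^k_2\subset\mathbb{R}^n$ be nonempty closed convex non-intersecting sets, one of them bounded. Let $(x^{1}_{k*},x^{2}_{k*})$ minimize $\|x^1-x^2\|_2$ over $x^1\in X^k_1,x^2\in X^k_2$, and set $h_k=(x^1_{k*}-x^2_{k*})/\|x^1_{k*}-x^2_{k*}\|_2$, $c_k=\tfrac12h_k^T(x^1_{k*}+x^2_{k*})$, $\delta_k=\tfrac12\|x^1_{k*}-x^2_{k*}\|_2$. Given potentials $\eta_1,\dots,\eta_K$, let $\phi^{(K)}(\omega_1,\dots,\omega_K)=\sum_{k=1}^K\eta_k(h_k^T\omega_k-c_k)$. Consider observations $\omega_k=x_k+\xi_k$, $k\le K$, where $(x_k)$ is a deterministic sequence, $\xi_k\sim p_k$ are independent and $(p_k\in\mathcal{P}^k)$ is a deterministic sequence, and the hypotheses $H_\chi:\ x_k\in X^k_\chi$ for all $k\le K$, $\chi=1,2$. Let $\mathcal{T}^\eta_K$ accept $H_1$ when $\phi^{(K)}(\omega_1,\dots,\omega_K)\ge0$ and accept $H_2$ otherwise. Then the risk of $\mathcal{T}^\eta_K$ does not exceed $\prod_{k=1}^K\mathrm{risk}_{\delta_k}(\eta_k|\mathcal{P}^k)$.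
   Context: A potential is an odd, nondecreasing Borel function $\eta:\mathbb{R}\to\mathbb{R}$. For a family $\mathcal{P}$ of probability densities on $\mathbb{R}^n$, $\delta\ge0$ and a potential $\eta$, $\mathrm{risk}_\delta(\eta|\mathcal{P})$ is the smallest $\epsilon$ such that for all unit $e\in\mathbb{R}^n$ and all $p\in\mathcal{P}$: $\int e^{-\eta(\delta+e^T\xi)}p(\xi)d\xi\le\epsilon$ and $\int e^{\eta(e^T\xi-\delta)}p(\xi)d\xi\le\epsilon$. The risk of a test is $\max_{\chi=1,2}$ of the supremum, over all deterministic sequences $x_k\in X^k_\chi$ and $p_k\in\mathcal{P}^k$, $k\le K$, of the probability that the test rejects $H_\chi$. *)

(* Defs.v *)
From mathcomp Require Import all_boot all_order all_algebra.
From mathcomp Require Import all_classical all_reals all_analysis.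
Set Implicit Arguments. Unset Strict Implicit. Unset Printing Implicit Defensive.
Import Order.TTheory GRing.Theory Num.Theory numFieldNormedType.Exports.
Local Open Scope classical_set_scope.
Local Open Scope ring_scope.

Section Defs.
Variable R : realType.

Definition dotv n (u v : 'rV[R]_n) : R := (u *m v^T) 0 0.
Definition norm2 n (u : 'rV[R]_n) : R := Num.sqrt (dotv u u).

(* Lebesgue integral over R^n of a nonnegative extended-real function,
   written as the iterated integral over the coordinates (Tonelli). *)
Fixpoint iint (n : nat) : ('rV[R]_n -> \bar R) -> \bar R :=
  match n return ('rV[R]_n -> \bar R) -> \bar R with
  | 0 => fun f => f 0
  | m.+1 => fun f =>
      (\int[@lebesgue_measure R]_(t in [set: R])
          iint (fun v : 'rV[R]_m => f (row_mx (const_mx t : 'rV[R]_1) v)))%E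
  end.

Definition borelRn n : set (set 'rV[R]_n) := <<s [set U : set 'rV[R]_n | open U] >>.

Definition prob_density n (p : 'rV[R]_n -> R) : Prop :=
  (forall x, 0 <= p x) /\
  (forall B : set R, measurable B -> borelRn (p @^-1` B)) /\
  iint (fun x => (p x)%:E) = 1%E.

Definition potential (eta : R -> R) : Prop :=
  measurable_fun [set: R] eta /\
  (forall x, eta (- x) = - eta x) /\
  {homo eta : x y / x <= y}.

Definition risk_delta n (delta : R) (eta : R -> R) (P : set ('rV[R]_n -> R))
  : \bar R :=
  ereal_inf [set eps : \bar R | forall (e : 'rV[R]_n) (p : 'rV[R]_n -> R),
      norm2 e = 1 -> P p ->
      (iint (fun xi => (expR (- eta (delta + dotv e xi)) * p xi)%:E) <= eps)%E /\
      (iint (fun xi => (expR (eta (dotv e xi - delta)) * p xi)%:E) <= eps)%E].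

(* Probability that the test (acceptance region for H_1 given by accept1 on the
   matrix of observations omega, whose k-th row is omega_k) rejects H_chi, when
   omega_k = x_k + xi_k with xi_k ~ p_k independent: integral of the indicator
   against the product density, over R^(K*n). *)
Definition rej_prob K n (accept1 : 'M[R]_(K, n) -> bool) (chi1 : bool)
  (x : 'M[R]_(K, n)) (p : 'I_K -> 'rV[R]_n -> R) : \bar R :=
  iint (fun v : 'rV[R]_(K * n) =>
          let xi := vec_mx v in
          ((if accept1 (x + xi) != chi1 then 1 else 0) *
           \prod_(k < K) p k (row k xi))%:E).

Definition test_risk K n (X1 X2 : 'I_K -> set 'rV[R]_n)
  (P : 'I_K -> set ('rV[R]_n -> R)) (accept1 : 'M[R]_(K, n) -> bool) : \bar R :=
  maxe
    (ereal_sup [set r | exists (x : 'M[R]_(K, n)) (p : 'I_K -> 'rV[R]_n -> R),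
        (forall k, X1 k (row k x)) /\ (forall k, P k (p k)) /\
        r = rej_prob accept1 true x p])
    (ereal_sup [set r | exists (x : 'M[R]_(K, n)) (p : 'I_K -> 'rV[R]_n -> R),
        (forall k, X2 k (row k x)) /\ (forall k, P k (p k)) /\
        r = rej_prob accept1 false x p]).

End Defs.

(* Main.v *)
Require Import Defs.
From mathcomp Require Import all_boot all_order all_algebra.
From mathcomp Require Import all_classical all_reals all_analysis.
From mathcomp Require Import measurable_realfun.
From mathcomp Require Import zify.
From mathcomp.algebra_tactics Require Import ring lra.
Import Order.TTheory GRing.Theory Num.Theory numFieldNormedType.Exports.
Local Open Scope classical_set_scope.
Local Open Scope ring_scope.
Set Implicit Arguments. Unset Strict Implicit. Unset Printing Implicit Defensive.

Import HBNNSimple.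
Section IntLemmas.
Context d (T : measurableType d) (R : realType) (mu : {measure set T -> \bar R}).
Local Open Scope ereal_scope.

Lemma int_mono (f g : T -> \bar R) : (forall x, 0 <= f x) -> (forall x, f x <= g x) ->
  \int[mu]_x f x <= \int[mu]_x g x.
Proof.
move=> f0 fg; rewrite !ge0_integralTE //; last by move=> x; exact: le_trans (f0 x) (fg x).
apply: ereal_sup_le => _ [h hf <-]; exists h => // x; exact: le_trans (hf x) (fg x).
Qed.

Lemma int_scale (k : R) (f : T -> \bar R) : (0 <= k)%R -> (forall x, 0 <= f x) ->
  \int[mu]_x (k%:E * f x) <= k%:E * \int[mu]_x f x.
Proof.
move=> k0 f0; have [->|kn0] := eqVneq k 0%R.
  by rewrite mul0e; under eq_integral do rewrite mul0e; rewrite integral0.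
have kp : (0 < k)%R by rewrite lt_neqAle eq_sym kn0.
have ki0 : (0 <= k^-1)%R by rewrite invr_ge0.
rewrite !ge0_integralTE //; last by move=> x; rewrite mule_ge0.
apply: ge_ereal_sup => _ [h hf <-].
rewrite (eq_sintegral (cst k \* (scale_nnsfun h ki0))%R); last first.
  by move=> x /=; rewrite mulrA divff ?mul1r.
rewrite sintegralrM; apply: lee_wpmul2l; first by rewrite lee_fin.
apply: ereal_sup_ubound; exists (scale_nnsfun h ki0) => // x /=.
rewrite EFinM; apply: le_trans (lee_wpmul2l _ (hf x)) _; first by rewrite lee_fin.
by rewrite muleA -EFinM mulVf// mul1e.
Qed.

Lemma int_split (D : set T) (mD : measurable D) (f : T -> \bar R) : (forall x, 0 <= f x) ->
  \int[mu]_x f x <= \int[mu]_x (f \_ D) x + \int[mu]_x (f \_ (~` D)) x.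
Proof.
move=> f0.
have mDC : measurable (~` D) by exact: measurableC.
rewrite !ge0_integralTE //; last 2 first.
  by move=> x; apply: erestrict_ge0.
  by move=> x; apply: erestrict_ge0.
apply: ge_ereal_sup => _ [h hf <-].
rewrite (eq_sintegral (proj_nnsfun h mD \+ proj_nnsfun h mDC)%R); last first.
  move=> x /=; rewrite !mindicE in_setC; case: (x \in D) => /=.
    by rewrite mulr1 mulr0 addr0.
  by rewrite mulr1 mulr0 add0r.
rewrite sintegralD; apply: leeD; apply: ereal_sup_ubound.
  exists (proj_nnsfun h mD) => // x /=; rewrite /patch mindicE; case: ifP => _ /=.
    by rewrite mulr1.
  by rewrite mulr0.
exists (proj_nnsfun h mDC) => // x /=; rewrite /patch mindicE; case: ifP => _ /=.
  by rewrite mulr1.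
by rewrite mulr0.
Qed.
End IntLemmas.
Lemma index_allpairs (T1 T2 : eqType) (s : seq T1) (t : seq T2) x y :
  x \in s -> y \in t ->
  index (x, y) [seq (a, b) | a <- s, b <- t] = (index x s * size t + index y t)%N.
Proof.
move=> xs yt; elim: s xs => [//|a s IH] /=; rewrite in_cons.
rewrite index_cat.
have inj : injective (fun b : T2 => (a, b)) by move=> b1 b2 [].
case: (eqVneq x a) => [->|xa] /= xs.
  by rewrite (mem_map inj) yt (index_map inj).
have -> : (x, y) \in [seq (a, b) | b <- t] = false.
  by apply/negbTE/mapP => -[b _ [] xa']; rewrite xa' eqxx in xa.
rewrite IH // size_map mulSn; lia.
Qed.

Lemma mxvec_index_val m n (i : 'I_m) (j : 'I_n) :
  (mxvec_index i j : nat) = (i * n + j)%N.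
Proof.
rewrite /mxvec_index /= /enum_rank enum_rank_in.unlock insubdK; last first.
  by rewrite unfold_in /= cardE index_mem mem_enum.
rewrite enumT unlock /= /prod_enum index_allpairs ?mem_enum //.
by rewrite !index_enum_ord size_enum_ord.
Qed.

Lemma vec_mx_row_mx (R : ringType) n K (u : 'rV[R]_n) (w : 'rV[R]_(K * n)) :
  vec_mx (row_mx u w : 'rV_(K.+1 * n)) = col_mx u (vec_mx w).
Proof.
apply/matrixP => i j; rewrite !mxE.
have hv := @mxvec_index_val K.+1 n i j.
case: splitP => [k hk|k hk]; case: splitP => [i' hi'|i' hi'].
- rewrite ord1; congr (u 0 _); apply: val_inj => /=.
  by rewrite -hk hv hi' ord1.
- exfalso; move: hk (ltn_ord k); rewrite hv hi'; lia.
- exfalso; move: hk (ltn_ord k) (ltn_ord j); rewrite hv hi' ord1 /=; lia.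
- rewrite mxE; congr (w 0 _); apply: val_inj => /=.
  have := @mxvec_index_val K n i' j; rewrite /mxvec_index /= => ->.
  move: hk; rewrite hv hi'; lia.
Qed.
Section IintLemmas.
Context (R : realType).
Local Open Scope ereal_scope.

Lemma iint_ge0 n (f : 'rV[R]_n -> \bar R) : (forall v, 0 <= f v) -> 0 <= iint f.
Proof.
elim: n f => [|m IH] f f0 /=; first exact: f0.
by apply: integral_ge0 => t _; apply: IH => v.
Qed.

Lemma iint_mono n (f g : 'rV[R]_n -> \bar R) : (forall v, 0 <= f v) ->
  (forall v, f v <= g v) -> iint f <= iint g.
Proof.
elim: n f g => [|m IH] f g f0 fg /=; first exact: fg.
apply: int_mono => [t|t]; first by apply: iint_ge0.
by apply: IH.
Qed.

Lemma iint_scale n (k : R) (f : 'rV[R]_n -> \bar R) : (0 <= k)%R ->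
  (forall v, 0 <= f v) -> iint (fun v => k%:E * f v) <= k%:E * iint f.
Proof.
move=> k0; elim: n f => [|m IH] f f0 /=; first by [].
apply: (@le_trans _ _ (\int[@lebesgue_measure R]_t
   (k%:E * iint (fun v : 'rV[R]_m => f (row_mx (const_mx t : 'rV[R]_1) v))))); last first.
  by apply: int_scale => // t; apply: iint_ge0.
apply: int_mono => t; first by apply: iint_ge0 => v; rewrite mule_ge0.
by apply: IH.
Qed.

Lemma iint_split a b (f : 'rV[R]_(a + b) -> \bar R) :
  iint f = iint (fun u : 'rV[R]_a => iint (fun w : 'rV[R]_b => f (row_mx u w))).
Proof.
elim: a f => [|a IH] f /=.
  congr iint; apply: funext => w; congr f.
  apply/rowP => j; rewrite mxE; case: splitP => [[]//|k hk].
  by congr (w ord0 _); apply: val_inj.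
congr integral; apply: funext => t; rewrite IH; congr iint; apply: funext => u.
congr iint; apply: funext => w; congr f.
by rewrite row_mxA castmx_id.
Qed.

End IintLemmas.
Section Prod.
Context (R : realType).
Local Open Scope ereal_scope.

Lemma prode_gt0' (K : nat) (B : 'I_K -> \bar R) : (forall k, 0 < B k) -> 0 < \prod_(k < K) B k.
Proof. by move=> B0; apply: (big_ind (fun x => 0 < x)) => // x y; apply: mule_gt0. Qed.

Lemma row0_col_mx n K (u : 'rV[R]_n) (M : 'M[R]_(K, n)) :
  row ord0 (col_mx u M : 'M[R]_(K.+1, n)) = u.
Proof.
apply/rowP => j; rewrite !mxE; case: splitP => [i _|i /= hi]; first by rewrite ord1.
by [].
Qed.

Lemma rowS_col_mx n K (u : 'rV[R]_n) (M : 'M[R]_(K, n)) k :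
  row (lift ord0 k) (col_mx u M : 'M[R]_(K.+1, n)) = row k M.
Proof.
apply/rowP => j; rewrite !mxE; case: splitP => [i /= hi|i /= hi]; first by move: hi; rewrite ord1 /bump.
by congr (M _ j); apply: val_inj; move: hi; rewrite /bump /=; lia.
Qed.

Lemma iint_prod n K (g : 'I_K -> 'rV[R]_n -> R) (B : 'I_K -> \bar R) :
  (forall k v, (0 <= g k v)%R) -> (forall k, iint (fun v => (g k v)%:E) <= B k) ->
  (forall k, 0 < B k) ->
  iint (fun v : 'rV[R]_(K * n) => (\prod_(k < K) g k (row k (vec_mx v)))%:E)
    <= \prod_(k < K) B k.
Proof.
elim: K g B => [|K IH] g B g0 gB B0.
  by rewrite /= !big_ord0.
set C := \prod_(k < K) B (lift ord0 k).
have C0 : 0 < C by apply: prode_gt0'.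
have C0' : 0 <= C by apply: ltW.
rewrite big_ord_recl.
rewrite (@iint_split R n (K*n)).
have g0' : forall v, 0 <= (g ord0 v)%:E by move=> v; rewrite lee_fin.
apply: (@le_trans _ _ (iint (fun u => (g ord0 u)%:E * C))).
  apply: iint_mono => u.
    by apply: iint_ge0 => w; rewrite lee_fin; apply: prodr_ge0 => k _.
  apply: (@le_trans _ _ (iint (fun w : 'rV[R]_(K * n) => (g ord0 u)%:E *
      (\prod_(k < K) g (lift ord0 k) (row k (vec_mx w)))%:E))).
    apply: iint_mono => w.
      by rewrite lee_fin; apply: prodr_ge0 => k _.
    rewrite vec_mx_row_mx big_ord_recl row0_col_mx EFinM.
    by under eq_bigr do rewrite rowS_col_mx.
  apply: le_trans (iint_scale (g0 ord0 u) _) _.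
    by move=> w; rewrite lee_fin; apply: prodr_ge0 => k _.
  apply: lee_wpmul2l => //.
  by apply: (IH (fun k => g (lift ord0 k)) (fun k => B (lift ord0 k))) => // k; apply: g0.
move: C0 C0'; rewrite /C; case: (\prod_(k < K) B (lift ord0 k)) => [c| |] // C0 C0'.
  rewrite muleC; under eq_fun do rewrite muleC.
  have c0 : (0 <= c)%R by rewrite -lee_fin.
  apply: le_trans (iint_scale c0 g0') _.
  by apply: lee_wpmul2l => //; apply: gB.
by rewrite gt0_muley ?leey.
Qed.
End Prod.
Section Geom.
Context (R : realType).

Lemma dotvE n (u v : 'rV[R]_n) : dotv u v = \sum_j u 0 j * v 0 j.
Proof. by rewrite /dotv !mxE; apply: eq_bigr => j _; rewrite !mxE. Qed.

Lemma dotvC n (u v : 'rV[R]_n) : dotv u v = dotv v u.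
Proof. by rewrite !dotvE; apply: eq_bigr => j _; rewrite mulrC. Qed.

Lemma dotvDl n (u v w : 'rV[R]_n) : dotv (u + v) w = dotv u w + dotv v w.
Proof. by rewrite !dotvE -big_split; apply: eq_bigr => j _; rewrite !mxE mulrDl. Qed.

Lemma dotvZl n a (u w : 'rV[R]_n) : dotv (a *: u) w = a * dotv u w.
Proof. by rewrite !dotvE mulr_sumr; apply: eq_bigr => j _; rewrite !mxE mulrA. Qed.

Lemma dotvNl n (u w : 'rV[R]_n) : dotv (- u) w = - dotv u w.
Proof. by rewrite -scaleN1r dotvZl mulN1r. Qed.

Lemma dotvDr n (u v w : 'rV[R]_n) : dotv w (u + v) = dotv w u + dotv w v.
Proof. by rewrite dotvC dotvDl !(dotvC w). Qed.

Lemma dotvZr n a (u w : 'rV[R]_n) : dotv w (a *: u) = a * dotv w u.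
Proof. by rewrite dotvC dotvZl dotvC. Qed.

Lemma dotvNr n (u w : 'rV[R]_n) : dotv w (- u) = - dotv w u.
Proof. by rewrite dotvC dotvNl dotvC. Qed.

Lemma dotv_ge0 n (u : 'rV[R]_n) : 0 <= dotv u u.
Proof. by rewrite dotvE; apply: sumr_ge0 => j _; rewrite -expr2 sqr_ge0. Qed.

Lemma norm2_sqr n (u : 'rV[R]_n) : norm2 u ^+ 2 = dotv u u.
Proof. by rewrite /norm2 sqr_sqrtr ?dotv_ge0. Qed.

Lemma norm2_ge0 n (u : 'rV[R]_n) : 0 <= norm2 u.
Proof. exact: sqrtr_ge0. Qed.

Lemma norm2_gt0 n (u : 'rV[R]_n) : u != 0 -> 0 < norm2 u.
Proof.
move=> u0; rewrite /norm2 sqrtr_gt0 lt_neqAle dotv_ge0 andbT eq_sym.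
apply: contra u0 => /eqP; rewrite dotvE => /psumr_eq0P H.
apply/eqP/rowP => j; rewrite mxE; apply/eqP.
have := H (fun i _ => sqr_ge0 (u 0 i)) j isT.
by move/eqP; rewrite mulf_eq0 orbb.
Qed.

Lemma norm2_le n (u v : 'rV[R]_n) : norm2 u <= norm2 v -> dotv u u <= dotv v v.
Proof.
by move=> uv; rewrite -!norm2_sqr ler_pXn2r // nnegrE norm2_ge0.
Qed.

Lemma sep_aux n (d w : 'rV[R]_n) :
  (forall t : R, 0 < t -> t <= 1 -> dotv d d <= dotv (d + t *: w) (d + t *: w)) ->
  0 <= dotv d w.
Proof.
move=> H; rewrite leNgt; apply/negP => a0.
set a := dotv d w in a0; set b := dotv w w.
have b0 : 0 <= b by apply: dotv_ge0.
have ba : 0 < b - a by rewrite subr_gt0; apply: lt_le_trans a0 b0.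
set t := - a / (b - a).
have t0 : 0 < t by rewrite divr_gt0 // oppr_gt0.
have t1 : t <= 1 by rewrite ler_pdivrMr // mul1r; lra.
have teq : t * (b - a) = - a by rewrite /t divfK // gt_eqF.
have := H t t0 t1.
rewrite !dotvDl !dotvDr !dotvZl !dotvZr (dotvC w d) -/a -/b => h.
nra.
Qed.

End Geom.
Section Geom2.
Context (R : realType).

Lemma spec01 (t : R) : 0 <= t -> t <= 1 -> Itv.spec (@Itv.num_sem R) (Itv.Real `[0, 1]%Z) t.
Proof. by move=> t0 t1; apply/and3P; rewrite ?ger0_real ?bnd_simp. Qed.

Lemma mk01 (t : R) : 0 <= t -> t <= 1 -> {l : {i01 R} | l%:num = t}.
Proof. by move=> t0 t1; exists (Itv.mk (spec01 t0 t1)). Qed.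

Lemma norm2N n (u : 'rV[R]_n) : norm2 (- u) = norm2 u.
Proof. by rewrite /norm2 dotvNl dotvNr opprK. Qed.

Lemma sep_convex n (A : set 'rV[R]_n) (a z : 'rV[R]_n)
  (HA : convex_set (A : set (convex_lmodType 'rV[R]_n))) (Aa : A a)
  (Hmin : forall y, A y -> norm2 (a - z) <= norm2 (y - z)) :
  forall x, A x -> 0 <= dotv (a - z) (x - a).
Proof.
move=> x Ax; apply: sep_aux => t t0 t1.
have [l lt] := mk01 (ltW t0) t1.
have := HA x a l (mem_set Ax) (mem_set Aa); rewrite inE => Ay.
have := norm2_le (Hmin _ Ay).
suff -> : (conv l (x : convex_lmodType 'rV[R]_n) a) - z = a - z + t *: (x - a) by [].
apply/rowP => j; rewrite !mxE /= /unstable.onem lt; ring.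
Qed.

Lemma sep_hc1 n (x1 x2 x : 'rV[R]_n) : 0 < norm2 (x1 - x2) ->
  0 <= dotv (x1 - x2) (x - x1) ->
  2^-1 * norm2 (x1 - x2) <=
  dotv ((norm2 (x1 - x2))^-1 *: (x1 - x2)) x -
  2^-1 * dotv ((norm2 (x1 - x2))^-1 *: (x1 - x2)) (x1 + x2).
Proof.
set N := norm2 (x1 - x2); set d := x1 - x2 => N0 H.
rewrite !dotvZl dotvDr.
have NN : N ^+ 2 = dotv d x1 - dotv d x2 by rewrite norm2_sqr {1}/d dotvDr dotvNr.
move: H; rewrite dotvDr dotvNr => H.
set I := N^-1.
have I0 : 0 <= I by rewrite invr_ge0 ltW.
have IN : I * N = 1 by rewrite mulVf // gt_eqF.
have h1 : I * dotv d x1 - I * dotv d x2 = N.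
  by rewrite -mulrBr -NN expr2 mulrA IN mul1r.
have h2 : 0 <= I * dotv d x - I * dotv d x1 by rewrite -mulrBr mulr_ge0.
lra.
Qed.

Lemma sep_hc2 n (x1 x2 x : 'rV[R]_n) : 0 < norm2 (x1 - x2) ->
  0 <= dotv (x2 - x1) (x - x2) ->
  dotv ((norm2 (x1 - x2))^-1 *: (x1 - x2)) x -
  2^-1 * dotv ((norm2 (x1 - x2))^-1 *: (x1 - x2)) (x1 + x2) <=
  - (2^-1 * norm2 (x1 - x2)).
Proof.
set N := norm2 (x1 - x2); set d := x1 - x2 => N0 H.
rewrite !dotvZl dotvDr.
have NN : N ^+ 2 = dotv d x1 - dotv d x2 by rewrite norm2_sqr {1}/d dotvDr dotvNr.
move: H; rewrite -opprB -/d dotvNl dotvDr dotvNr oppr_ge0 => H.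
set I := N^-1.
have I0 : 0 <= I by rewrite invr_ge0 ltW.
have IN : I * N = 1 by rewrite mulVf // gt_eqF.
have h1 : I * dotv d x1 - I * dotv d x2 = N.
  by rewrite -mulrBr -NN expr2 mulrA IN mul1r.
have h2 : I * dotv d x - I * dotv d x2 <= 0 by rewrite -mulrBr mulr_ge0_le0.
lra.
Qed.

End Geom2.
Section Risk.
Context (R : realType).
Local Open Scope ereal_scope.

Lemma iint_ext n (f g : 'rV[R]_n -> \bar R) : (forall v, f v = g v) -> iint f = iint g.
Proof. by move=> fg; congr iint; apply: funext. Qed.

Lemma dotv_row_mx a b (u1 v1 : 'rV[R]_a) (u2 v2 : 'rV[R]_b) :
  dotv (row_mx u1 u2) (row_mx v1 v2) = (dotv u1 v1 + dotv u2 v2)%R.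
Proof.
rewrite !dotvE big_split_ord /=; congr (_ + _)%R; apply: eq_bigr => j _.
  by rewrite !row_mxEl.
by rewrite !row_mxEr.
Qed.

Lemma risk_lbA n (dl : R) (eta : R -> R) (P : set ('rV[R]_n -> R)) e p :
  norm2 e = 1%R -> P p ->
  iint (fun xi => (expR (- eta (dl + dotv e xi)) * p xi)%:E) <= risk_delta dl eta P.
Proof. by move=> e1 Pp; apply: le_ereal_inf_tmp => y Sy; exact: (Sy e p e1 Pp).1. Qed.

Lemma risk_lbB n (dl : R) (eta : R -> R) (P : set ('rV[R]_n -> R)) e p :
  norm2 e = 1%R -> P p ->
  iint (fun xi => (expR (eta (dotv e xi - dl)) * p xi)%:E) <= risk_delta dl eta P.
Proof. by move=> e1 Pp; apply: le_ereal_inf_tmp => y Sy; exact: (Sy e p e1 Pp).2. Qed.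

Lemma risk_pos n (dl : R) (eta : R -> R) (P : set ('rV[R]_n -> R)) :
  (0 < n)%N -> potential eta -> P !=set0 -> (forall p, P p -> prob_density p) ->
  0 < risk_delta dl eta P.
Proof.
case: n P => [//|m] P _ [_ [odd mono]] [p Pp] Hd.
have [p0 [_ p1]] := Hd p Pp.
pose e : 'rV[R]_(1 + m) := row_mx (const_mx 1%R) 0%R.
have dote : forall t (v : 'rV[R]_m), dotv e (row_mx (const_mx t : 'rV[R]_1) v) = t.
  move=> t v; rewrite dotv_row_mx !dotvE big_ord1 !mxE mul1r big1 ?addr0 // => j _.
  by rewrite mxE mul0r.
have e1 : norm2 e = 1%R by rewrite /norm2 {2}/e dote sqrtr1.
have hA := risk_lbA dl eta e1 Pp.
have hB := risk_lbB dl eta e1 Pp.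
rewrite ltNge; apply/negP => r0.
set M := expR (- eta dl).
have M0 : (0 < M)%R by apply: expR_gt0.
have Mi0 : (0 <= M^-1)%R by rewrite invr_ge0 ltW.
pose Q t := iint (fun v : 'rV[R]_m => (p (row_mx (const_mx t : 'rV[R]_1) v))%:E).
pose FA t := iint (fun v : 'rV[R]_m =>
  (expR (- eta (dl + dotv e (row_mx (const_mx t : 'rV[R]_1) v))) *
     p (row_mx (const_mx t : 'rV[R]_1) v))%:E).
pose FB t := iint (fun v : 'rV[R]_m =>
  (expR (eta (dotv e (row_mx (const_mx t : 'rV[R]_1) v) - dl)) *
     p (row_mx (const_mx t : 'rV[R]_1) v))%:E).
have HQ : \int[@lebesgue_measure R]_t Q t = 1 by rewrite -p1.
have HA : \int[@lebesgue_measure R]_t FA t <= risk_delta dl eta P by exact: hA.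
have HB : \int[@lebesgue_measure R]_t FB t <= risk_delta dl eta P by exact: hB.
have Q0 t : 0 <= Q t by apply: iint_ge0 => v; rewrite lee_fin.
have FA0 t : 0 <= FA t by apply: iint_ge0 => v; rewrite lee_fin mulr_ge0 ?expR_ge0.
have FB0 t : 0 <= FB t by apply: iint_ge0 => v; rewrite lee_fin mulr_ge0 ?expR_ge0.
have Qscale t (f : R) : (M <= f)%R ->
    Q t <= M^-1%:E * iint (fun v : 'rV[R]_m =>
       (f * p (row_mx (const_mx t : 'rV[R]_1) v))%:E).
  move=> Mf.
  rewrite /Q (@iint_ext _ _ (fun v : 'rV[R]_m => M^-1%:E *
      (M * p (row_mx (const_mx t : 'rV[R]_1) v))%:E)); last first.
    by move=> v; rewrite -EFinM mulrA mulVf ?mul1r // gt_eqF.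
  apply: le_trans (iint_scale Mi0 _) _.
    by move=> v; rewrite lee_fin mulr_ge0 // ltW.
  apply: lee_wpmul2l; first by rewrite lee_fin.
  apply: iint_mono => v; first by rewrite lee_fin mulr_ge0 // ltW.
  by rewrite lee_fin ler_wpM2r.
pose D : set R := `]-oo, 0%R]%classic.
have mD : measurable D by apply: measurable_itv.
have h1 := int_split (@lebesgue_measure R) mD Q0.
have hD : \int[@lebesgue_measure R]_t (Q \_ D) t <= M^-1%:E * \int[@lebesgue_measure R]_t FA t.
  apply: le_trans _ (int_scale (@lebesgue_measure R) Mi0 FA0).
  apply: int_mono => t; first by apply: erestrict_ge0.
  rewrite /patch; case: ifPn => tD; last by rewrite mule_ge0 // lee_fin.
  have t0 : (t <= 0)%R by move: tD; rewrite inE /D /= in_itv.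
  have Mf : (M <= expR (- eta (dl + t)))%R.
    by rewrite ler_expR lerN2; apply: mono; rewrite gerDl.
  apply: le_trans (Qscale t _ Mf) _.
  apply: lee_wpmul2l; first by rewrite lee_fin.
  by apply: iint_mono => v; [rewrite lee_fin mulr_ge0 ?expR_ge0 | rewrite dote].
have hDC : \int[@lebesgue_measure R]_t (Q \_ (~` D)) t <= M^-1%:E * \int[@lebesgue_measure R]_t FB t.
  apply: le_trans _ (int_scale (@lebesgue_measure R) Mi0 FB0).
  apply: int_mono => t; first by apply: erestrict_ge0.
  rewrite /patch; case: ifPn => tD; last by rewrite mule_ge0 // lee_fin.
  have t0 : (0 < t)%R.
    rewrite ltNge; apply/negP => t0.
    have Dt : D t by rewrite /D /= in_itv /= t0.
    by move: tD; rewrite in_setC => /negP; apply; exact: mem_set.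
  have Mf : (M <= expR (eta (t - dl)))%R.
    by rewrite ler_expR -odd; apply: mono; rewrite lerBrDr addNr ltW.
  apply: le_trans (Qscale t _ Mf) _.
  apply: lee_wpmul2l; first by rewrite lee_fin.
  by apply: iint_mono => v; [rewrite lee_fin mulr_ge0 ?expR_ge0 | rewrite dote].
have : ((1 : \bar R) <= 0).
  rewrite -HQ; apply: le_trans h1 _.
  rewrite -(adde0 0); apply: leeD.
    apply: le_trans hD _; rewrite -(mule0 (M^-1%:E)); apply: lee_wpmul2l; first by rewrite lee_fin.
    exact: le_trans HA r0.
  apply: le_trans hDC _; rewrite -(mule0 (M^-1%:E)); apply: lee_wpmul2l; first by rewrite lee_fin.
  exact: le_trans HB r0.
by rewrite lee_fin ler10.
Qed.

End Risk.
Section Misc.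
Context (R : realType).

Lemma rV0 (u v : 'rV[R]_0) : u = v.
Proof. by apply/rowP => -[]. Qed.

Lemma npos_of n (u v : 'rV[R]_n) : 0 < norm2 (u - v) -> (0 < n)%N.
Proof.
case: n u v => // u v; rewrite (rV0 u v) subrr /norm2 dotvE big_ord0 sqrtr0.
by rewrite ltxx.
Qed.

Lemma rowD' m n i (A B : 'M[R]_(m, n)) : row i (A + B) = row i A + row i B.
Proof. by apply/rowP => j; rewrite !mxE. Qed.

Lemma pw_bound K (a P : 'I_K -> R) : (forall k, 0 <= P k) -> 0 <= \sum_k a k ->
  \prod_k P k <= \prod_k (expR (a k) * P k).
Proof.
move=> P0 a0; rewrite big_split /= -expR_sum.
rewrite -{1}(mul1r (\prod_k P k)); apply: ler_wpM2r.
  by apply: prodr_ge0 => k _.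
by apply: le_trans (expR_ge1Dx _); rewrite lerDl.
Qed.
End Misc.

Unset Implicit Arguments.

Theorem corollary2p11 (R : realType) (n K : nat)
  (P : 'I_K -> set ('rV[R]_n -> R))
  (HPdens : forall k p, P k p -> prob_density p)
  (HPne : forall k, P k !=set0)
  (X1 X2 : 'I_K -> set 'rV[R]_n)
  (HX1ne : forall k, X1 k !=set0) (HX2ne : forall k, X2 k !=set0)
  (HX1cl : forall k, closed (X1 k)) (HX2cl : forall k, closed (X2 k))
  (HX1cv : forall k, convex_set (X1 k : set (convex_lmodType 'rV[R]_n)))
  (HX2cv : forall k, convex_set (X2 k : set (convex_lmodType 'rV[R]_n)))
  (HXdisj : forall k, X1 k `&` X2 k = set0)
  (HXbd : forall k, bounded_set (X1 k) \/ bounded_set (X2 k))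
  (x1s x2s : 'I_K -> 'rV[R]_n)
  (Hx1s : forall k, X1 k (x1s k)) (Hx2s : forall k, X2 k (x2s k))
  (Hmin : forall k (y1 y2 : 'rV[R]_n), X1 k y1 -> X2 k y2 ->
            norm2 (x1s k - x2s k) <= norm2 (y1 - y2))
  (eta : 'I_K -> R -> R) (Heta : forall k, potential (eta k)) :
  let h k := (norm2 (x1s k - x2s k))^-1 *: (x1s k - x2s k) in
  let c k := 2^-1 * dotv (h k) (x1s k + x2s k) in
  let delta k := 2^-1 * norm2 (x1s k - x2s k) in
  let phi (omega : 'M[R]_(K, n)) :=
    \sum_(k < K) eta k (dotv (h k) (row k omega) - c k) in
  (test_risk X1 X2 P (fun omega => (0 <= phi omega)%R)
     <= \prod_(k < K) risk_delta (delta k) (eta k) (P k))%E.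
Proof.
pose h k := (norm2 (x1s k - x2s k))^-1 *: (x1s k - x2s k).
pose c k := 2^-1 * dotv (h k) (x1s k + x2s k).
pose delta k := 2^-1 * norm2 (x1s k - x2s k).
pose phi (omega : 'M[R]_(K, n)) :=
    \sum_(k < K) eta k (dotv (h k) (row k omega) - c k).
change (test_risk X1 X2 P (fun omega => (0 <= phi omega)%R)
     <= \prod_(k < K) risk_delta (delta k) (eta k) (P k))%E.
have Np k : 0 < norm2 (x1s k - x2s k).
  apply: norm2_gt0; rewrite subr_eq0; apply/eqP => e.
  have := HXdisj k; rewrite -subset0 => /(_ (x1s k)) H; apply: H; split => //.
  by rewrite e.
have hu k : norm2 (h k) = 1.
  rewrite /norm2 /h dotvZl dotvZr -norm2_sqr mulrA -expr2 -exprMn mulVf.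
    by rewrite expr1n sqrtr1.
  by rewrite gt_eqF.
have sep1 k x : X1 k x -> delta k <= dotv (h k) x - c k.
  move=> Hx; rewrite /delta /c /h; apply: sep_hc1 => //.
  apply: (sep_convex (HX1cv k) (Hx1s k)) => // y Hy.
  exact: Hmin Hy (Hx2s k).
have sep2 k x : X2 k x -> dotv (h k) x - c k <= - delta k.
  move=> Hx; rewrite /delta /c /h; apply: sep_hc2 => //.
  apply: (sep_convex (HX2cv k) (Hx2s k)) => // y Hy.
  rewrite -(norm2N (x2s k - x1s k)) -(norm2N (y - x1s k)) !opprB.
  exact: Hmin (Hx1s k) Hy.
have risk0 k : (0 < risk_delta (delta k) (eta k) (P k))%E.
  apply: risk_pos => //; first exact: npos_of (Np k).
  by move=> p; apply: HPdens.
have pge0 k q : P k q -> forall v, 0 <= q v by move=> Pq; have [] := HPdens k q Pq.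
rewrite /test_risk ge_max; apply/andP; split;
  apply: ge_ereal_sup => _ [x [p [Hx [Hp ->]]]].
- pose g k xi := expR (- eta k (delta k + dotv (h k) xi)) * p k xi.
  have g0 k v : 0 <= g k v by rewrite mulr_ge0 ?expR_ge0 // (pge0 k).
  have gB k : (iint (fun v => (g k v)%:E) <= risk_delta (delta k) (eta k) (P k))%E.
    exact: risk_lbA (hu k) (Hp k).
  apply: le_trans (iint_prod g0 gB risk0).
  rewrite /rej_prob; apply: iint_mono => v /=.
    rewrite lee_fin mulr_ge0 //; first by case: ifP.
    by apply: prodr_ge0 => k _; apply: (pge0 k).
  rewrite lee_fin; case: (boolP (0 <= phi (x + vec_mx v))) => hphi /=.
    by rewrite mul0r; apply: prodr_ge0 => k _.
  rewrite mul1r; apply: pw_bound => [k|]; first by apply: (pge0 k).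
  rewrite sumrN oppr_ge0; apply: ltW; apply: le_lt_trans (_ : _ <= phi (x + vec_mx v)) _.
    apply: ler_sum => k _; apply: (proj2 (proj2 (Heta k))).
    rewrite rowD' dotvDr.
    have := sep1 k _ (Hx k); lra.
  by rewrite ltNge.
- pose g k xi := expR (eta k (dotv (h k) xi - delta k)) * p k xi.
  have g0 k v : 0 <= g k v by rewrite mulr_ge0 ?expR_ge0 // (pge0 k).
  have gB k : (iint (fun v => (g k v)%:E) <= risk_delta (delta k) (eta k) (P k))%E.
    exact: risk_lbB (hu k) (Hp k).
  apply: le_trans (iint_prod g0 gB risk0).
  rewrite /rej_prob; apply: iint_mono => v /=.
    rewrite lee_fin mulr_ge0 //; first by case: ifP.
    by apply: prodr_ge0 => k _; apply: (pge0 k).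
  rewrite lee_fin; case: (boolP (0 <= phi (x + vec_mx v))) => hphi /=; last first.
    by rewrite mul0r; apply: prodr_ge0 => k _.
  rewrite mul1r; apply: pw_bound => [k|]; first by apply: (pge0 k).
  apply: le_trans hphi _.
  apply: ler_sum => k _; apply: (proj2 (proj2 (Heta k))).
  rewrite rowD' dotvDr.
  have := sep2 k _ (Hx k); lra.
Qed.
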